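(* Let $q=2^n$, let $B$ be a $k$-subset of $\mathrm{GF}(q)$ with $k\ge3$, and let $\mathcal B=\mathrm{GA}_1(q)(B)$. Then the following are equivalent: (1) $(\mathrm{GF}(q),\mathcal B)$ is a $3$-design; (2) $\sum_{x,y\in\mathrm{GF}(q)}(-1)^{f_B(x)+f_B(y)+f_B(ux+(1+u)y)}$ is independent of $u\in\mathrm{GF}(q)\setminus\mathrm{GF}(2)$; (3) $\sum_{\alpha\in\mathrm{GF}(q)}\hat f_B(\alpha)\hat f_B(u\alpha)\hat f_B((1+u)\alpha)$ is independent of $u\in\mathrm{GF}(q)\setminus\mathrm{GF}(2)$; (4) $N_B(u,1+u,1)$ is independent of $u\in\mathrm{GF}(q)\setminus\mathrm{GF}(2)$.
   Context: $\mathrm{Tr}$ is the absolute trace $\mathrm{GF}(2^n)\to\mathrm{GF}(2)$. $f_B$ is the characteristic function of $B$ as a Boolean function, and $\hat f(\mu)=\sum_{x\in\mathrm{GF}(2^n)}(-1)^{f(x)+\mathrm{Tr}(\mu x)}$ is the Walsh transform. $N_B(a,b,c)$ is the number of triples $(x,y,z)\in B^3$ with $ax+by+cz=0$. $\mathrm{GA}_1(q)$ is the group of permutations $x\mapsto ax+b$ of $\mathrm{GF}(q)$ with $a\ne0$; $\mathrm{GA}_1(q)(B)=\{\pi(B):\pi\in\mathrm{GA}_1(q)\}$. A pair $(\mathcal P,\mathcal B)$ with $\mathcal B$ a set of $k$-subsets of $\mathcal P$ is a $3$-design if every $3$-subset of $\mathcal P$ lies in exactly $\lambda$ members of $\mathcal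 B$ for some constant $\lambda$. *)

(* Defs.v *)
From HB Require Import structures.
From mathcomp Require Import all_boot all_order all_algebra all_field.
Set Implicit Arguments. Unset Strict Implicit. Unset Printing Implicit Defensive.
Import Order.TTheory GRing.Theory Num.Theory.
Local Open Scope ring_scope.

Section Defs.
Variables (F : finFieldType) (n : nat).

(* absolute trace GF(2^n) -> GF(2), valued in the prime subfield of F *)
Definition Tr (x : F) : F := \sum_(i < n) x ^+ (2 ^ i).

Definition chi (t : F) : int := if t == 0 then 1 else -1.

Definition fB (B : {set F}) (x : F) : F := (x \in B)%:R.

Definition walsh (B : {set F}) (mu : F) : int :=
  \sum_(x : F) chi (fB B x + Tr (mu * x)).

Definition NB (B : {set F}) (a b c : F) : nat :=
  #|[set t : F * F * F | [&& t.1.1 \in B, t.1.2 \in B, t.2 \in B &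
                            a * t.1.1 + b * t.1.2 + c * t.2 == 0]]|.

Definition GA1_orbit (B : {set F}) : {set {set F}} :=
  [set (fun x => ab.1 * x + ab.2) @: B | ab in [set ab : F * F | ab.1 != 0]].

Definition is_3design (Blocks : {set {set F}}) : Prop :=
  exists lambda : nat, forall T : {set F}, #|T| = 3%N ->
    #|[set X in Blocks | T \subset X]| = lambda.

End Defs.

(* Main.v *)
Require Import Defs.
From HB Require Import structures.
From mathcomp Require Import all_boot all_order all_algebra all_field.
From mathcomp Require Import zify ring lra.
Set Implicit Arguments. Unset Strict Implicit. Unset Printing Implicit Defensive.
Import Order.TTheory GRing.Theory Num.Theory.
Local Open Scope ring_scope.

Section S.
Variables (n : nat) (F : finFieldType) (hF : #|F| = (2 ^ n)%N).

Lemma two0 : (1 + 1 : F) = 0.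
Proof.
have := card_finPcharP hF (isT : prime 2).
by case/andP => _ /eqP.
Qed.

Lemma addFF (x : F) : x + x = 0.
Proof. by rewrite -{1 2}(mulr1 x) -mulrDr two0 mulr0. Qed.

Lemma oppF (x : F) : - x = x.
Proof. by apply/esym/eqP; rewrite -addr_eq0 addFF. Qed.

Lemma n_gt0 : (0 < n)%N.
Proof.
case: n hF => // h. have := finNzRing_gt1 F. by rewrite h.
Qed.

Lemma sqrD (a b : F) : (a + b) ^+ 2 = a ^+ 2 + b ^+ 2.
Proof. by rewrite sqrrD -mulr_natr -[2%:R]/(1+1 : F) two0 mulr0 addr0. Qed.

Lemma expD2 i (a b : F) : (a + b) ^+ (2 ^ i) = a ^+ (2 ^ i) + b ^+ (2 ^ i).
Proof.
elim: i => [|i IH]; first by rewrite !expr1.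
by rewrite expnS mulnC !exprM IH sqrD.
Qed.

Lemma TrD (a b : F) : Tr n (a + b) = Tr n a + Tr n b.
Proof. by rewrite /Tr -big_split /=; apply: eq_bigr => i _; rewrite expD2. Qed.

Lemma Tr0 : Tr n (0 : F) = 0.
Proof. by rewrite /Tr big1 // => i _; rewrite expr0n expn_eq0. Qed.

Lemma sqr_sum (I : Type) (r : seq I) (f : I -> F) :
  (\sum_(i <- r) f i) ^+ 2 = \sum_(i <- r) f i ^+ 2.
Proof.
elim: r => [|a r IH]; first by rewrite !big_nil expr0n.
by rewrite !big_cons sqrD IH.
Qed.

Lemma Tr_sq (a : F) : Tr n a ^+ 2 = Tr n a.
Proof.
rewrite /Tr sqr_sum.
have := n_gt0; case: n hF => // m hm _.
rewrite big_ord_recr big_ord_recl /=.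
under eq_bigr do rewrite -exprM -expnSr.
by rewrite -exprM -expnSr -hm expf_card addrC.
Qed.

Lemma Tr_bit (a : F) : (Tr n a == 0) || (Tr n a == 1).
Proof.
have := Tr_sq a; rewrite expr2 => /eqP.
rewrite -subr_eq0 -[X in _ - X](mulr1 (Tr n a)) -mulrBr mulf_eq0 subr_eq0.
by [].
Qed.


Lemma Tr_onto : exists b : F, Tr n b = 1.
Proof.
have [/existsP [b /eqP hb]|] := boolP [exists b : F, Tr n b == 1]; first by exists b.
rewrite negb_exists => /forallP h; exfalso.
have h0 : forall b : F, Tr n b = 0.
  by move=> b; have := Tr_bit b; rewrite (negbTE (h b)) orbF => /eqP.
pose P : {poly F} := \sum_(i < n) 'X^(2 ^ i).
have hP : forall x, P.[x] = Tr n x.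
  by move=> x; rewrite /P horner_sum /Tr; apply: eq_bigr => i _; rewrite hornerXn.
have n0 := n_gt0.
have P1 : P`_1 = 1.
  rewrite /P coef_sum.
  rewrite (eq_bigr (fun i : 'I_n => ((1 == 2 ^ i)%N)%:R)); last by move=> i _; rewrite coefXn.
  rewrite -(prednK n0) big_ord_recl /= big1 ?addr0 //.
  move=> i _; rewrite /bump /= add1n eq_sym.
  have : (1 < 2 ^ i.+1)%N by rewrite -{1}(expn0 2) ltn_exp2l.
  by case: (2 ^ i.+1)%N => [|[|]].
have P0 : P != 0.
  by apply/eqP => P0; move: P1; rewrite P0 coef0 => /eqP; rewrite eq_sym oner_eq0.
have szP : (size P <= (2 ^ n.-1).+1)%N.
  apply: leq_trans (size_sum _ _ _) _; apply/bigmax_leqP => i _.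
  rewrite size_polyXn ltnS leq_exp2l //; by rewrite -ltnS prednK.
have := max_poly_roots P0 (rs := enum F).
rewrite enum_uniq -cardE hF => /(_ _ isT).
have -> : all (root P) (enum F) by apply/allP => x _; rewrite /root hP h0.
move=> /(_ isT) /(leq_trans)/(_ szP); rewrite ltnS leq_exp2l //.
by rewrite -ltnS prednK // ltnn.
Qed.


Definition bit (t : F) := (t == 0) || (t == 1).

Lemma bitD a b : bit a -> bit b -> bit (a + b).
Proof.
rewrite /bit => /orP [] /eqP -> /orP [] /eqP ->; rewrite ?two0 ?add0r ?addr0 ?eqxx ?orbT //.
Qed.

Lemma chiD a b : bit a -> bit b -> chi (a + b) = chi a * chi b.
Proof.
rewrite /bit /chi => /orP [] /eqP -> /orP [] /eqP ->;
  rewrite ?two0 ?add0r ?addr0 ?eqxx ?oner_eq0 ?eqxx //.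
Qed.

Lemma Tr_orth (w : F) :
  \sum_(a : F) chi (Tr n (a * w)) = ((w == 0)%:R * #|F|%:R)%R.
Proof.
have [->|wn0] := eqVneq w 0.
  rewrite mul1r (eq_bigr (fun _ => 1)); last by move=> a _; rewrite mulr0 Tr0 /chi eqxx.
  by rewrite sumr_const -mulr_natl mulr1 cardT.
rewrite mul0r.
have -> : \sum_(a : F) chi (Tr n (a * w)) = \sum_(a : F) chi (Tr n a).
  by rewrite [RHS](reindex_inj (mulIf wn0)).
have [b0 hb0] := Tr_onto.
set S := \sum_(a : F) chi (Tr n a).
have : S = - S.
  rewrite {1}/S (reindex_inj (addIr b0)) /= /S -sumrN; apply: eq_bigr => a _.
  rewrite TrD hb0; have := Tr_bit a; rewrite /chi.
  case/orP => /eqP ->; first by rewrite add0r oner_eq0 eqxx.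
  by rewrite two0 eqxx oner_eq0 opprK.
lia.
Qed.


Lemma bit_Tr (a : F) : bit (Tr n a).
Proof. exact: Tr_bit. Qed.

Lemma chiTr3 (a b c : F) :
  chi (Tr n (a + b + c)) = chi (Tr n a) * chi (Tr n b) * chi (Tr n c).
Proof. by rewrite !TrD chiD ?bitD ?bit_Tr // chiD ?bit_Tr. Qed.

Lemma sum_delta (G : F -> int) v : \sum_(x : F) (x == v)%:R * G x = G v.
Proof.
rewrite (bigD1 v) //= eqxx mul1r big1 ?addr0 // => x /negbTE ->; by rewrite mul0r.
Qed.

Variable B : {set F}.

Definition g x := chi (fB B x).

Lemma bit_fB x : bit (fB B x).
Proof. by rewrite /bit /fB; case: (x \in B); rewrite ?eqxx ?orbT. Qed.

Lemma chi3 x y z : chi (fB B x + fB B y + fB B z) = g x * g y * g z.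
Proof. by rewrite chiD ?bitD ?bit_fB // chiD ?bit_fB. Qed.

Lemma walshE mu : walsh n B mu = \sum_(x : F) g x * chi (Tr n (mu * x)).
Proof. by apply: eq_bigr => x _; rewrite chiD ?bit_fB ?bit_Tr. Qed.

Definition S2 u := \sum_(x : F) \sum_(y : F)
            chi (fB B x + fB B y + fB B (u * x + (1 + u) * y)).

Lemma S3_eq u :
  \sum_(alpha : F) walsh n B alpha * walsh n B (u * alpha)
                          * walsh n B ((1 + u) * alpha) = #|F|%:R * S2 u.
Proof.
have e1 : forall a, walsh n B a * walsh n B (u * a) * walsh n B ((1 + u) * a) =
   \sum_(x : F) \sum_(y : F) \sum_(z : F)
      g x * g y * g z * chi (Tr n (a * (x + (u * y + (1 + u) * z)))).
  move=> a; rewrite !walshE big_distrl big_distrl; apply: eq_bigr => x _ /=.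
  rewrite -mulrA big_distrl big_distrr; apply: eq_bigr => y _ /=.
  rewrite big_distrr big_distrr; apply: eq_bigr => z _ /=.
  have -> : a * (x + (u * y + (1 + u) * z)) = a * x + u * a * y + (1 + u) * a * z by ring.
  rewrite chiTr3; ring.
rewrite (eq_bigr _ (fun a _ => e1 a)) exchange_big /=.
apply: etrans (_ : \sum_(x : F) \sum_(y : F) \sum_(z : F)
   g x * g y * g z * ((x + (u * y + (1 + u) * z) == 0)%:R * #|F|%:R) = _).
  apply: eq_bigr => x _; rewrite exchange_big; apply: eq_bigr => y _.
  rewrite exchange_big; apply: eq_bigr => z _.
  by rewrite -Tr_orth big_distrr.
apply: etrans (_ : \sum_(x : F) \sum_(y : F) \sum_(z : F)
   (x == u * y + (1 + u) * z)%:R * (g x * g y * g z * #|F|%:R) = _).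
  apply: eq_bigr => x _; apply: eq_bigr => y _; apply: eq_bigr => z _.
  rewrite addr_eq0 oppF; ring.
rewrite exchange_big; under eq_bigr do rewrite exchange_big /=.
rewrite /S2 big_distrr; apply: eq_bigr => y _.
rewrite big_distrr; apply: eq_bigr => z _ /=.
by rewrite sum_delta chi3; ring.
Qed.


Definition e (x : F) : int := (x \in B)%:R.

Lemma gE x : g x = 1 - 2 * e x.
Proof. by rewrite /g /chi /fB /e; case: (x \in B); rewrite ?oner_eq0 ?eqxx. Qed.

Lemma sum_e : \sum_(x : F) e x = #|B|%:R.
Proof.
rewrite /e -natr_sum; congr (_ %:R).
by rewrite -sum1_card [RHS]big_mkcond /=; apply: eq_bigr => x _; case: (x \in B).
Qed.

Lemma sum_e_inj (h : F -> F) : injective h -> \sum_(x : F) e (h x) = #|B|%:R.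
Proof. by move=> hi; rewrite -sum_e [RHS](reindex_inj hi). Qed.

Lemma sum3 (G : F * F * F -> int) :
  \sum_t G t = \sum_(x : F) \sum_(y : F) \sum_(z : F) G (x, y, z).
Proof.
rewrite (pair_bigA _ (fun x y => \sum_(z : F) G (x, y, z))) /=.
rewrite [LHS](eq_bigr (fun t => G (t.1, t.2))); last by case.
rewrite -(pair_bigA _ (fun p z => G (p, z))) /=.
by apply: eq_bigr => -[x y].
Qed.

Definition Nf u := NB B u (1 + u) 1.

Lemma NfE u : (Nf u)%:R = \sum_(x : F) \sum_(y : F) e x * e y * e (u * x + (1 + u) * y) :> int.
Proof.
rewrite /Nf /NB -sum1dep_card natr_sum big_mkcond /=.
rewrite sum3.
apply: eq_bigr => x _; apply: eq_bigr => y _.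
rewrite (bigD1 (u * x + (1 + u) * y)) //= big1 ?addr0.
  rewrite mul1r addFF eqxx andbT /e.
  by case: (x \in B); case: (y \in B); case: (_ \in B).
move=> z hz; rewrite mul1r andbA.
have -> : (u * x + (1 + u) * y + z == 0) = false.
  by apply/negbTE; rewrite addr_eq0 oppF eq_sym.
by rewrite !andbF.
Qed.


Lemma S2E u : u != 0 -> 1 + u != 0 ->
  S2 u = (#|F|%:R ^+ 2 - 6 * #|B|%:R * #|F|%:R + 12 * #|B|%:R ^+ 2 - 8 * (Nf u)%:R :> int).
Proof.
move=> u0 u1.
rewrite NfE /S2.
set q : int := #|F|%:R; set k : int := #|B|%:R.
have -> : \sum_(x : F) \sum_(y : F) chi (fB B x + fB B y + fB B (u * x + (1 + u) * y)) =
  \sum_(x : F) \sum_(y : F) (1 + (-2) * e x + (-2) * e y + (-2) * e (u * x + (1 + u) * y)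
     + 4 * (e x * e y) + 4 * (e x * e (u * x + (1 + u) * y))
     + 4 * (e y * e (u * x + (1 + u) * y)) + (-8) * (e x * e y * e (u * x + (1 + u) * y))).
  by apply: eq_bigr => x _; apply: eq_bigr => y _; rewrite chi3 !gE; ring.
under eq_bigr do rewrite !big_split /= -!mulr_sumr.
rewrite !big_split /= -!mulr_sumr.
have hk : forall (i : F), \sum_(j : F) e (u * i + (1 + u) * j) = k.
  by move=> i; apply: sum_e_inj => a b /addrI /(mulfI u1).
have hk' : forall (j : F), \sum_(i : F) e (u * i + (1 + u) * j) = k.
  by move=> j; apply: sum_e_inj => a b /addIr /(mulfI u0).
have A0 : \sum_(i : F) \sum_(j : F) (1 : int) = q ^+ 2.
  by rewrite !sumr_const -mulr_natr -mulr_natl mulr1 expr2.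
have A1 : \sum_(i : F) \sum_(j : F) e i = k * q.
  by rewrite (eq_bigr (fun i => e i *+ #|F|)) ?sumrMnl ?sum_e ?mulr_natr // => i _; rewrite sumr_const.
have A2 : \sum_(i : F) \sum_(j : F) e j = k * q.
  by rewrite (eq_bigr (fun i => k)) ?sumr_const ?mulr_natr // => i _; rewrite sum_e.
have A3 : \sum_(i : F) \sum_(j : F) e (u * i + (1 + u) * j) = k * q.
  by rewrite (eq_bigr (fun i => k)) ?sumr_const ?mulr_natr // => i _; rewrite hk.
have A4 : \sum_(i : F) e i * \sum_(j : F) e j = k * k.
  by rewrite sum_e -mulr_suml sum_e.
have A5 : \sum_(i : F) e i * \sum_(j : F) e (u * i + (1 + u) * j) = k * k.
  by rewrite (eq_bigr (fun i => e i * k)) => [|i _]; rewrite ?hk // -mulr_suml sum_e.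
have A6 : \sum_(i : F) \sum_(j : F) e j * e (u * i + (1 + u) * j) = k * k.
  rewrite exchange_big /= (eq_bigr (fun j => e j * k)) => [|j _].
    by rewrite -mulr_suml sum_e.
  by rewrite -mulr_sumr hk'.
rewrite A0 A1 A2 A3 A4 A5 A6; ring.
Qed.


Definition act (p : F * F) (x : F) := p.1 * x + p.2.
Definition comp (p q : F * F) := (p.1 * q.1, p.1 * q.2 + p.2).

Lemma act_comp p q x : act (comp p q) x = act p (act q x).
Proof. rewrite /act /comp /=; ring. Qed.

Definition stab := [set p : F * F | (p.1 != 0) && (act p @: B == B)].

Lemma orbitP X : reflect (exists2 p : F * F, p.1 != 0 & X = act p @: B) (X \in GA1_orbit B).
Proof.
apply: (iffP imsetP) => [[p]|[p]]; rewrite ?inE => hp ->; by exists p; rewrite ?inE.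
Qed.

Lemma fiber X : X \in GA1_orbit B ->
  #|[set p : F * F | (p.1 != 0) && (act p @: B == X)]| = #|stab|.
Proof.
case/orbitP => p0 hp0 ->.
have -> : [set p : F * F | (p.1 != 0) && (act p @: B == act p0 @: B)] = comp p0 @: stab.
  apply/setP => p; rewrite inE; apply/andP/imsetP.
  - case=> hp /eqP hpB.
    pose h (y : F) := (y - p0.2) / p0.1.
    exists (p.1 / p0.1, (p.2 - p0.2) / p0.1).
      rewrite inE /= mulf_neq0 ?invr_eq0 //=.
      have -> : act (p.1 / p0.1, (p.2 - p0.2) / p0.1) @: B = h @: (act p @: B).
        rewrite -imset_comp; apply: eq_imset => x; rewrite /h /act /=; field.
        done.
      rewrite hpB -imset_comp (eq_imset _ (g := id)) ?imset_id //.
      by move=> x; rewrite /h /act /=; field.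
    case: p hp {hpB} => a b /= ha; rewrite /comp /=; congr (_, _); field; done.
  - case=> q; rewrite inE => /andP [hq /eqP hqB] ->.
    split; first by rewrite /comp /= mulf_neq0.
    apply/eqP; rewrite -[in RHS]hqB -imset_comp; apply: eq_imset => x.
    by rewrite /= act_comp.
rewrite card_in_imset // => -[a b] [a' b'] _ _; rewrite /comp /=.
by case => /(mulfI hp0) -> /addIr /(mulfI hp0) ->.
Qed.


Definition bT (T : {set F}) := #|[set X in GA1_orbit B | T \subset X]|.
Definition mT (T : {set F}) := #|[set p : F * F | (p.1 != 0) && (T \subset act p @: B)]|.

Lemma m_eq T : mT T = (#|stab| * bT T)%N.
Proof.
rewrite /mT -sum1dep_card (partition_big (fun p => act p @: B)
   (fun X => (X \in GA1_orbit B) && (T \subset X))) /=; last first.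
  by move=> p /andP [hp ->]; rewrite andbT; apply/orbitP; exists p.
rewrite (eq_bigr (fun _ => #|stab|)).
  rewrite /bT mulnC -sum1dep_card big_distrl /=.
  by apply: eq_bigr => X _; rewrite mul1n.
move=> X /andP [hX hTX]; rewrite -(fiber hX) sum1dep_card; apply: eq_card => p.
rewrite !inE; case: (act p @: B =P X) => [->|]; by rewrite ?hTX ?andbT ?andbF.
Qed.


Lemma card2 (Q : pred (F * F)) :
  (#|[set xy : F * F | Q xy]|)%:R = \sum_(x : F) \sum_(y : F) (Q (x, y))%:R :> int.
Proof.
rewrite -sum1dep_card natr_sum big_mkcond /=.
rewrite (pair_bigA _ (fun x y => (Q (x, y))%:R : int)) /=.
by apply: eq_bigr => -[x y] _; case: (Q _).
Qed.

Lemma mem_act p t : p.1 != 0 -> (t \in act p @: B) = ((t - p.2) / p.1 \in B).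
Proof.
move=> hp; apply/imsetP/idP => [[x hx ->]|h].
  by rewrite /act addrK mulrC mulKf.
by exists ((t - p.2) / p.1) => //; rewrite /act mulrC divfK // subrK.
Qed.

Section Triple.
Variables (t1 t2 t3 : F) (h12 : t1 != t2).

Definition lam := (t3 - t1) / (t2 - t1).
Definition uu := 1 + lam.
Definition sv (p : F * F) t := (t - p.2) / p.1.

Lemma h21 : t2 - t1 != 0.
Proof. by rewrite subr_eq0 eq_sym. Qed.

Lemma inv_rel p : p.1 != 0 -> sv p t3 = uu * sv p t1 + (1 + uu) * sv p t2.
Proof.
move=> hp; have h := h21.
have -> : 1 + uu = lam by rewrite /uu addrA two0 add0r.
have -> : sv p t3 = sv p t1 + lam * (sv p t2 - sv p t1).
  by rewrite /sv /lam; field; rewrite hp h.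
rewrite /uu mulrBr -[X in _ - X]oppF opprK; ring.
Qed.

Lemma recover p : p.1 != 0 ->
  p = ((t2 - t1) / (sv p t2 - sv p t1), t1 - (t2 - t1) / (sv p t2 - sv p t1) * sv p t1).
Proof.
case: p => a b /= ha; have h := h21.
have -> : sv (a, b) t2 - sv (a, b) t1 = (t2 - t1) / a by rewrite /sv /=; field.
congr (_, _); rewrite /sv /=; field; by rewrite ?ha ?h.
Qed.

End Triple.


Lemma sub3 (t1 t2 t3 : F) (A : {set F}) :
  ([set t1; t2; t3] \subset A) = [&& t1 \in A, t2 \in A & t3 \in A].
Proof. by rewrite !subUset !sub1set andbA. Qed.

Lemma mT_C t1 t2 t3 : t1 != t2 ->
  mT [set t1; t2; t3] = #|[set xy : F * F | [&& xy.1 != xy.2, xy.1 \in B, xy.2 \in B &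
       uu t1 t2 t3 * xy.1 + (1 + uu t1 t2 t3) * xy.2 \in B]]|.
Proof.
move=> h12; set u := uu t1 t2 t3.
pose phi (p : F * F) := (sv p t1, sv p t2).
have Hd : forall p : F * F, p.1 != 0 -> sv p t1 != sv p t2.
  move=> p hp; apply/eqP => /(congr1 (fun z => z * p.1)).
  rewrite /sv !divfK // => /addIr /eqP; by rewrite (negbTE h12).
rewrite /mT -(@card_in_imset _ _ phi); last first.
  move=> p p' /[!inE] /andP [hp _] /andP [hp' _] [e1 e2].
  by rewrite [LHS](recover h12 hp) [RHS](recover h12 hp') e1 e2.
apply: eq_card => -[x y]; rewrite [in RHS]inE /=; apply/imsetP/idP.
- case=> p /[!inE] /andP [hp]; rewrite sub3 !mem_act // => /and3P [h1 h2 h3] [-> ->].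
  by rewrite Hd // h1 h2 -inv_rel.
- case/and4P => hxy hx hy hz.
  have hyx : y - x != 0 by rewrite subr_eq0 eq_sym.
  have h21 : t2 - t1 != 0 by rewrite subr_eq0 eq_sym.
  pose p := ((t2 - t1) / (y - x), t1 - (t2 - t1) / (y - x) * x).
  have hp : p.1 != 0 by rewrite /p /= mulf_neq0 ?invr_eq0.
  have e1 : sv p t1 = x by rewrite /sv /p /=; field; rewrite hyx h21.
  have e2 : sv p t2 = y by rewrite /sv /p /=; field; rewrite hyx h21.
  exists p; last by rewrite /phi e1 e2.
  rewrite inE hp sub3 !mem_act // -/(sv p t1) -/(sv p t2) -/(sv p t3) (@inv_rel t1 t2 t3 h12 p hp) e1 e2.
  by rewrite hx hy hz.
Qed.


Lemma C_Nf u :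
  (#|[set xy : F * F | [&& xy.1 != xy.2, xy.1 \in B, xy.2 \in B &
       u * xy.1 + (1 + u) * xy.2 \in B]]|)%:R + #|B|%:R = (Nf u)%:R :> int.
Proof.
rewrite card2 NfE -sum_e -big_split /=; apply: eq_bigr => x _.
rewrite [RHS](bigD1 x) //= [in LHS](bigD1 x) //= eqxx /= add0r addrC; congr (_ + _).
  have -> : u * x + (1 + u) * x = x.
    by rewrite mulrDl mul1r addrCA -mulrDl addFF mul0r addr0.
  by rewrite /e; case: (x \in B).
apply: eq_bigr => y hy; rewrite eq_sym hy /e /=.
by case: (x \in B); case: (y \in B); case: (_ \in B).
Qed.


Lemma NfT t1 t2 t3 : t1 != t2 ->
  (Nf (uu t1 t2 t3))%:R = (mT [set t1; t2; t3])%:R + #|B|%:R :> int.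
Proof. by move=> h; rewrite mT_C // C_Nf. Qed.

Lemma stab_gt0 : (0 < #|stab|)%N.
Proof.
apply/card_gt0P; exists (1, 0); rewrite inE /= oner_neq0 /=.
apply/eqP; rewrite (eq_imset _ (g := id)) ?imset_id // => x; by rewrite /act /= mul1r addr0.
Qed.

Lemma card3E (T : {set F}) : #|T| = 3%N ->
  exists t1 t2 t3, [/\ t1 != t2, t2 != t3, t1 != t3 & T = [set t1; t2; t3]].
Proof.
move=> hT; have : (2 < #|T|)%N by rewrite hT.
case/card_gt2P => x [y [z [[hx hy hz] [hxy hyz hzx]]]].
exists x, y, z; split => //; first by rewrite eq_sym.
apply/eqP; rewrite eq_sym eqEcard hT !subUset !sub1set hx hy hz /=.
apply/card_gt2P; exists x, y, z; rewrite !inE !eqxx !orbT; by split.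
Qed.

Lemma uu_ok t1 t2 t3 : t1 != t2 -> t2 != t3 -> t1 != t3 ->
  (uu t1 t2 t3 != 0) && (uu t1 t2 t3 != 1).
Proof.
move=> h12 h23 h13; have h21 : t2 - t1 != 0 by rewrite subr_eq0 eq_sym.
rewrite /uu /lam; apply/andP; split.
  rewrite addr_eq0 (oppF ((t3 - t1) / (t2 - t1))); apply: contra h23 => /eqP h.
  have e := divfK h21 (t3 - t1); rewrite -h mul1r in e.
  by move/addIr: e => ->.
rewrite -subr_eq0 addrC addKr mulf_eq0 invr_eq0 (negbTE h21) orbF subr_eq0 eq_sym.
done.
Qed.

End S.
Lemma nat_inj (a b : nat) : a%:R = b%:R :> int -> a = b.
Proof. by move/eqP; rewrite eqr_nat => /eqP. Qed.

Lemma const_iff2 (F : finFieldType) (A : Type) (c0 : A) (f : F -> A) :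
  (exists c, forall u, u != 0 -> u != 1 -> f u = c) <->
  (forall u v, u != 0 -> u != 1 -> v != 0 -> v != 1 -> f u = f v).
Proof.
split=> [[c h] u v hu0 hu1 hv0 hv1|h]; first by rewrite h // h.
case: (pickP (fun u : F => (u != 0) && (u != 1))) => [u0 /andP [h0 h1]|hn].
  by exists (f u0) => u hu0 hu1; apply: h.
by exists c0 => u hu0 hu1; move: (hn u); rewrite hu0 hu1.
Qed.

Lemma const_gen (T : finType) (A : Type) (c0 : A) (D : pred T) (P : T -> Prop)
  (hD : forall u, reflect (P u) (D u)) (f : T -> A) :
  (exists c, forall u, P u -> f u = c) <-> (forall u v, P u -> P v -> f u = f v).
Proof.
split=> [[c h] u v hu hv|h]; first by rewrite h // h.
case: (pickP D) => [u0 /hD h0|hn].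
  by exists (f u0) => u hu; apply: h.
by exists c0 => u /hD; rewrite hn.
Qed.

Lemma card3 (F : finFieldType) (a b c : F) : a != b -> b != c -> a != c ->
  #|[set a; b; c]| = 3%N.
Proof.
move=> hab hbc hac.
have -> : [set a; b; c] = a |: (b |: [set c]) by apply/setP => x; rewrite !inE orbA.
by rewrite !cardsU1 cards1 !inE negb_or hab hac hbc.
Qed.

Theorem theorem9 (n : nat) (F : finFieldType) (hF : #|F| = (2 ^ n)%N)
    (k : nat) (B : {set F}) (hB : #|B| = k) (hk : (3 <= k)%N) :
  [<-> is_3design (GA1_orbit B);
       exists c : int, forall u : F, u != 0 -> u != 1 ->
         \sum_(x : F) \sum_(y : F)
            chi (fB B x + fB B y + fB B (u * x + (1 + u) * y)) = c;
       exists c : int, forall u : F, u != 0 -> u != 1 ->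
         \sum_(alpha : F) walsh n B alpha * walsh n B (u * alpha)
                          * walsh n B ((1 + u) * alpha) = c;
       exists c : nat, forall u : F, u != 0 -> u != 1 ->
         NB B u (1 + u) 1 = c].
Proof.
pose Q := forall u v : F, u != 0 -> u != 1 -> v != 0 -> v != 1 -> Nf B u = Nf B v.
have one1 : forall u : F, u != 1 -> 1 + u != 0.
  by move=> u; apply: contra; rewrite addr_eq0 (oppF hF) eq_sym.
have E4 : (exists c : nat, forall u : F, u != 0 -> u != 1 -> NB B u (1 + u) 1 = c) <-> Q.
  exact: (const_iff2 0%N (Nf B)).
have E2' : (forall u v : F, u != 0 -> u != 1 -> v != 0 -> v != 1 -> S2 B u = S2 B v) <-> Q.
  split=> h u v hu0 hu1 hv0 hv1.
    move: (h u v hu0 hu1 hv0 hv1); rewrite (S2E hF) ?one1 // (S2E hF) ?one1 //.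
    move/addrI/oppr_inj/(mulfI _) => /(_ isT); exact: nat_inj.
  by rewrite (S2E hF) ?one1 // (S2E hF) ?one1 // (h u v).
have E3' : (forall u v : F, u != 0 -> u != 1 -> v != 0 -> v != 1 ->
   \sum_(alpha : F) walsh n B alpha * walsh n B (u * alpha) * walsh n B ((1 + u) * alpha) =
   \sum_(alpha : F) walsh n B alpha * walsh n B (v * alpha) * walsh n B ((1 + v) * alpha))
   <-> Q.
  rewrite -E2'; split=> h u v hu0 hu1 hv0 hv1; move: (h u v hu0 hu1 hv0 hv1);
    rewrite !(S3_eq hF) //.
    apply: mulfI; by rewrite pnatr_eq0 hF expn_eq0.
  by move=> ->.
have E1' : (forall T T' : {set F}, #|T| = 3%N -> #|T'| = 3%N -> bT B T = bT B T') <-> Q.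
  split=> h.
  - move=> u v hu0 hu1 hv0 hv1.
    have key : forall w : F, w != 0 -> w != 1 ->
        (Nf B w)%:R = ((#|stab B| * bT B [set (0%R : F); 1%R; (1 + w)%R])%N)%:R + #|B|%:R :> int.
      move=> w hw0 hw1.
      have e : uu (0 : F) 1 (1 + w) = w by rewrite /uu /lam !subr0 divr1 addrA (two0 hF) add0r.
      rewrite -[X in Nf B X]e (NfT hF); last by rewrite eq_sym oner_neq0.
      by rewrite m_eq.
    have c3 : forall w : F, w != 0 -> w != 1 -> #|[set (0%R : F); 1%R; (1 + w)%R]| = 3%N.
      move=> w hw0 hw1; apply: card3.
      + by rewrite eq_sym oner_neq0.
      + by apply: contra hw0 => /eqP hh; rewrite -(addKr 1 w) -hh addNr.
      + by rewrite eq_sym one1.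
    by apply: nat_inj; rewrite key // key // (h _ _ (c3 u hu0 hu1) (c3 v hv0 hv1)).
  - move=> T T' /card3E [t1 [t2 [t3 [h12 h23 h13 ->]]]] /card3E [s1 [s2 [s3 [g12 g23 g13 ->]]]].
    apply/eqP; rewrite -(eqn_pmul2l (stab_gt0 B)) -!m_eq; apply/eqP.
    apply: nat_inj; apply: (addIr (#|B|%:R : int)); rewrite -!(NfT hF) //.
    have /andP [a0 a1] := uu_ok hF h12 h23 h13.
    have /andP [b0 b1] := uu_ok hF g12 g23 g13.
    by congr (_ %:R); apply: h.
have E1 : is_3design (GA1_orbit B) <-> Q.
  rewrite -E1'; exact: (const_gen 0%N (D := fun T : {set F} => #|T| == 3%N) (fun T => eqP) (bT B)).
have E2 : (exists c : int, forall u : F, u != 0 -> u != 1 ->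
         \sum_(x : F) \sum_(y : F)
            chi (fB B x + fB B y + fB B (u * x + (1 + u) * y)) = c) <-> Q.
  rewrite -E2'; exact: (const_iff2 0 (S2 B)).
have E3 : (exists c : int, forall u : F, u != 0 -> u != 1 ->
         \sum_(alpha : F) walsh n B alpha * walsh n B (u * alpha)
                          * walsh n B ((1 + u) * alpha) = c) <-> Q.
  rewrite -E3'; exact: (const_iff2 0 (fun u => \sum_(alpha : F) walsh n B alpha * walsh n B (u * alpha) * walsh n B ((1 + u) * alpha))).
tfae=> h.
- by apply/E2/E1.
- by apply/E3/E2.
- by apply/E4/E3.
- by apply/E1/E4.
Qed.
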